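(* Let $\mathcal F$ be an exact category with enough injective objects and $\mathcal M$ a subcategory of $\mathcal F$. Then there exists a subcategory $\mathcal N$ such that $(\mathcal M,\mathcal N)$ is a complete cotorsion pair in $\mathcal F$ if and only if $\mathcal M$ is special precovering and idempotent complete (closed under direct summands) in $\mathcal F$.
   Context: A pair $(\mathcal M,\mathcal N)$ of full subcategories of an exact category $\mathcal F$ is a complete cotorsion pair if $\mathcal N=\mathrm{Ker}\,\mathrm{Ext}^1_{\mathcal F}(\mathcal M,-)$, $\mathcal M=\mathrm{Ker}\,\mathrm{Ext}^1_{\mathcal F}(-,\mathcal N)$, $\mathcal M$ is special precovering (every $X\in\mathcal F$ fits in a conflation $0\to N_1\to M_1\to X\to0$ with $M_1\in\mathcal M$, $N_1\in\mathcal N$) and $\mathcal N$ is special preenveloping (every $X$ fits in a conflation $0\to X\to N_2\to M_2\to0$ with $N_2\in\mathcal N$, $M_2\in\mathcal M$). For a single subcategory $\mathcal M$, ''special precovering'' means every $X\in\mathcal F$ fits in a conflation $0\to K\to M\to X\to 0$ with $M\in\mathcal M$ and $\mathrm{Ext}^1_{\mathcal F}(\mathcal M,K)=0$. *)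

(* Defs.v *)
From HB Require Import structures.
From mathcomp Require Import all_boot all_algebra.
Set Implicit Arguments. Unset Strict Implicit. Unset Printing Implicit Defensive.
Import GRing.Theory.
Local Open Scope ring_scope.

Record precat := PreCat {
  Ob :> Type;
  Hom : Ob -> Ob -> zmodType;
  comp : forall X Y Z : Ob, Hom Y Z -> Hom X Y -> Hom X Z;
  idm : forall X : Ob, Hom X X
}.
Arguments Hom {p}.
Arguments comp {p X Y Z}.
Arguments idm {p}.

Section CatDefs.
Variable C : precat.

Definition preadditive_axioms : Prop :=
  (forall (X Y Z W : C) (f : Hom Z W) (g : Hom Y Z) (h : Hom X Y),
      comp f (comp g h) = comp (comp f g) h) /\
  (forall (X Y : C) (f : Hom X Y), comp (idm Y) f = f) /\
  (forall (X Y : C) (f : Hom X Y), comp f (idm X) = f) /\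
  (forall (X Y Z : C) (f g : Hom Y Z) (h : Hom X Y),
      comp (f + g) h = comp f h + comp g h) /\
  (forall (X Y Z : C) (h : Hom Y Z) (f g : Hom X Y),
      comp h (f + g) = comp h f + comp h g).

Definition is_biprod (X Y P : C) (p1 : Hom P X) (p2 : Hom P Y)
  (e1 : Hom X P) (e2 : Hom Y P) : Prop :=
  comp p1 e1 = idm X /\ comp p2 e2 = idm Y /\
  comp p1 e2 = 0 /\ comp p2 e1 = 0 /\
  comp e1 p1 + comp e2 p2 = idm P.

(** additive category: preadditive, with a zero object and binary biproducts *)
Definition additive_axioms : Prop :=
  preadditive_axioms /\
  (exists Z : C, idm Z = 0) /\
  (forall X Y : C, exists (P : C) (p1 : Hom P X) (p2 : Hom P Y)
                          (e1 : Hom X P) (e2 : Hom Y P), is_biprod p1 p2 e1 e2).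

Definition is_iso (X Y : C) (f : Hom X Y) : Prop :=
  exists g : Hom Y X, comp g f = idm X /\ comp f g = idm Y.

Definition is_kernel (A B D : C) (i : Hom A B) (d : Hom B D) : Prop :=
  comp d i = 0 /\
  forall (T : C) (f : Hom T B), comp d f = 0 -> exists! g : Hom T A, comp i g = f.

Definition is_cokernel (A B D : C) (i : Hom A B) (d : Hom B D) : Prop :=
  comp d i = 0 /\
  forall (T : C) (f : Hom B T), comp f i = 0 -> exists! g : Hom D T, comp g d = f.

Definition kernel_cokernel_pair (A B D : C) (i : Hom A B) (d : Hom B D) : Prop :=
  is_kernel i d /\ is_cokernel i d.

(** pushout square:   A --i--> B
                      f|       |f'
                      A' -i'-> B'   *)
Definition is_pushout (A B A' B' : C) (i : Hom A B) (f : Hom A A')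
  (i' : Hom A' B') (f' : Hom B B') : Prop :=
  comp i' f = comp f' i /\
  forall (T : C) (g : Hom A' T) (h : Hom B T), comp g f = comp h i ->
    exists! u : Hom B' T, comp u i' = g /\ comp u f' = h.

(** pullback square:  B' --d'--> C'
                      f'|        |f
                      B  --d-->  D   *)
Definition is_pullback (B D B' C' : C) (d : Hom B D) (f : Hom C' D)
  (d' : Hom B' C') (f' : Hom B' B) : Prop :=
  comp d f' = comp f d' /\
  forall (T : C) (g : Hom T C') (h : Hom T B), comp f g = comp d h ->
    exists! u : Hom T B', comp d' u = g /\ comp f' u = h.

Section Exact.
Variable E : forall A B D : C, Hom A B -> Hom B D -> Prop.

Definition E_inflation (A B : C) (i : Hom A B) : Prop :=
  exists (D : C) (d : Hom B D), E i d.
Definition E_deflation (B D : C) (d : Hom B D) : Prop :=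
  exists (A : C) (i : Hom A B), E i d.

(** Quillen's axioms for an exact structure (as in Buehler, Def. 2.1) *)
Definition exact_structure_axioms : Prop :=
  (forall (A B D : C) (i : Hom A B) (d : Hom B D), E i d -> kernel_cokernel_pair i d) /\
  (forall (A B D A' B' D' : C) (i : Hom A B) (d : Hom B D) (i' : Hom A' B') (d' : Hom B' D')
          (a : Hom A A') (b : Hom B B') (c : Hom D D'),
      E i d -> is_iso a -> is_iso b -> is_iso c ->
      comp i' a = comp b i -> comp d' b = comp c d -> E i' d') /\
  (forall X : C, E_inflation (idm X)) /\
  (forall X : C, E_deflation (idm X)) /\
  (forall (X Y Z : C) (i : Hom X Y) (j : Hom Y Z),
      E_inflation i -> E_inflation j -> E_inflation (comp j i)) /\
  (forall (X Y Z : C) (d : Hom X Y) (e : Hom Y Z),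
      E_deflation d -> E_deflation e -> E_deflation (comp e d)) /\
  (forall (A B A' : C) (i : Hom A B) (f : Hom A A'), E_inflation i ->
      exists (B' : C) (i' : Hom A' B') (f' : Hom B B'),
        is_pushout i f i' f' /\ E_inflation i') /\
  (forall (B D C' : C) (d : Hom B D) (f : Hom C' D), E_deflation d ->
      exists (B' : C) (d' : Hom B' C') (f' : Hom B' B),
        is_pullback d f d' f' /\ E_deflation d').
End Exact.
End CatDefs.

Record exact_cat := ExactCat {
  ecat :> precat;
  ecat_additive : additive_axioms ecat;
  confl : forall A B D : ecat, Hom A B -> Hom B D -> Prop;
  confl_exact : exact_structure_axioms confl
}.
Arguments confl {e A B D}.

Section ExactNotions.
Variable F : exact_cat.

Definition inflation (A B : F) (i : Hom A B) : Prop := E_inflation (@confl F) i.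

(** Ext^1_F(X, Y) = 0, i.e. the Yoneda Ext group vanishes:
    every conflation 0 -> Y -> E -> X -> 0 splits. *)
Definition Ext1_zero (X Y : F) : Prop :=
  forall (Z : F) (i : Hom Y Z) (d : Hom Z X), confl i d ->
    exists s : Hom X Z, comp d s = idm X.

Definition injective_obj (I : F) : Prop :=
  forall (A B : F) (i : Hom A B), inflation i ->
    forall f : Hom A I, exists g : Hom B I, comp g i = f.

Definition enough_injectives : Prop :=
  forall X : F, exists (I : F) (i : Hom X I), injective_obj I /\ inflation i.

(** (full) subcategories are given by predicates on objects *)
Definition subcat := F -> Prop.

Definition special_precovering (M : subcat) : Prop :=
  forall X : F, exists (K M0 : F) (i : Hom K M0) (d : Hom M0 X),
    confl i d /\ M M0 /\ (forall M' : F, M M' -> Ext1_zero M' K).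

Definition closed_under_summands (M : subcat) : Prop :=
  forall (X Y P : F) (p1 : Hom P X) (p2 : Hom P Y) (e1 : Hom X P) (e2 : Hom Y P),
    is_biprod p1 p2 e1 e2 -> M P -> M X.

Definition complete_cotorsion_pair (M N : subcat) : Prop :=
  (forall Y : F, N Y <-> (forall X : F, M X -> Ext1_zero X Y)) /\
  (forall X : F, M X <-> (forall Y : F, N Y -> Ext1_zero X Y)) /\
  (forall X : F, exists (N1 M1 : F) (i : Hom N1 M1) (d : Hom M1 X),
      confl i d /\ M M1 /\ N N1) /\
  (forall X : F, exists (N2 M2 : F) (i : Hom X N2) (d : Hom N2 M2),
      confl i d /\ N N2 /\ M M2).
End ExactNotions.

(* Main.v *)
Require Import Defs.
From mathcomp Require Import all_boot all_algebra.
Import Defs.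
Set Implicit Arguments. Unset Strict Implicit. Unset Printing Implicit Defensive.
Import GRing.Theory.
Local Open Scope ring_scope.

Section Helpers.
Variable F : exact_cat.

Lemma assoc (X Y Z W : F) (f : Hom Z W) (g : Hom Y Z) (h : Hom X Y) :
  comp f (comp g h) = comp (comp f g) h.
Proof. by case: (ecat_additive F) => [[H _] _]; apply: H. Qed.
Lemma comp1l (X Y : F) (f : Hom X Y) : comp (idm Y) f = f.
Proof. by case: (ecat_additive F) => [[_ [H _]] _]; apply: H. Qed.
Lemma comp1r (X Y : F) (f : Hom X Y) : comp f (idm X) = f.
Proof. by case: (ecat_additive F) => [[_ [_ [H _]]] _]; apply: H. Qed.
Lemma compDl (X Y Z : F) (f g : Hom Y Z) (h : Hom X Y) :
  comp (f + g) h = comp f h + comp g h.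
Proof. by case: (ecat_additive F) => [[_ [_ [_ [H _]]]] _]; apply: H. Qed.
Lemma compDr (X Y Z : F) (h : Hom Y Z) (f g : Hom X Y) :
  comp h (f + g) = comp h f + comp h g.
Proof. by case: (ecat_additive F) => [[_ [_ [_ [_ H]]]] _]; apply: H. Qed.

Lemma comp0l (X Y Z : F) (f : Hom X Y) : comp (0 : Hom Y Z) f = 0.
Proof.
have H := compDl (0 : Hom Y Z) 0 f; rewrite addr0 in H.
apply: (addIr (comp (0 : Hom Y Z) f)); rewrite add0r; exact: (esym H).
Qed.
Lemma comp0r (X Y Z : F) (f : Hom Y Z) : comp f (0 : Hom X Y) = 0.
Proof.
have H := compDr f (0 : Hom X Y) 0; rewrite addr0 in H.
apply: (addIr (comp f (0 : Hom X Y))); rewrite add0r; exact: (esym H).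
Qed.
Lemma compNl (X Y Z : F) (f : Hom Y Z) (h : Hom X Y) : comp (- f) h = - comp f h.
Proof. by apply: (addrI (comp f h)); rewrite -compDl !subrr comp0l. Qed.
Lemma compNr (X Y Z : F) (h : Hom Y Z) (f : Hom X Y) : comp h (- f) = - comp h f.
Proof. by apply: (addrI (comp h f)); rewrite -compDr !subrr comp0r. Qed.

Lemma uniq2 (T : Type) (P : T -> Prop) : (exists! x, P x) -> forall a b, P a -> P b -> a = b.
Proof. by move=> [x [_ U]] a b Pa Pb; rewrite -(U a Pa) (U b Pb). Qed.

Lemma ker_mono (A B D T : F) (i : Hom A B) (d : Hom B D) (g1 g2 : Hom T A) :
  is_kernel i d -> comp i g1 = comp i g2 -> g1 = g2.
Proof.
move=> [di H] e; have := H T (comp i g1); rewrite assoc di comp0l => /(_ erefl) U.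
exact: (uniq2 U).
Qed.
Lemma coker_epi (A B D T : F) (i : Hom A B) (d : Hom B D) (g1 g2 : Hom D T) :
  is_cokernel i d -> comp g1 d = comp g2 d -> g1 = g2.
Proof.
move=> [di H] e; have := H T (comp g1 d); rewrite -assoc di comp0r => /(_ erefl) U.
exact: (uniq2 U).
Qed.

Lemma E_kc (A B D : F) (i : Hom A B) (d : Hom B D) :
  confl i d -> is_kernel i d /\ is_cokernel i d.
Proof. by case: (confl_exact F) => [H _] /H []. Qed.

Lemma E_iso (A B D A' B' D' : F) (i : Hom A B) (d : Hom B D) (i' : Hom A' B') (d' : Hom B' D')
          (a : Hom A A') (b : Hom B B') (c : Hom D D') :
      confl i d -> is_iso a -> is_iso b -> is_iso c ->
      comp i' a = comp b i -> comp d' b = comp c d -> confl i' d'.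
Proof. by case: (confl_exact F) => [_ [H _]]; apply: H. Qed.

Lemma E1 (X Y Z : F) (i : Hom X Y) (j : Hom Y Z) :
      inflation i -> inflation j -> inflation (comp j i).
Proof. by case: (confl_exact F) => [_ [_ [_ [_ [H _]]]]]; apply: H. Qed.

Lemma E2op (A B D C' : F) (i : Hom A B) (d : Hom B D) (f : Hom C' D) : confl i d ->
      exists (B' : F) (d' : Hom B' C') (f' : Hom B' B),
        is_pullback d f d' f' /\ E_deflation (@confl F) d'.
Proof.
case: (confl_exact F) => [_ [_ [_ [_ [_ [_ [_ H]]]]]]] E; apply: H.
by exists A, i.
Qed.

Lemma iso_id (X : F) : is_iso (idm X).
Proof. by exists (idm X); rewrite comp1l. Qed.

Lemma pb_sym (B D B' C' : F) (d : Hom B D) (f : Hom C' D) (d' : Hom B' C') (f' : Hom B' B) :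
  is_pullback d f d' f' -> is_pullback f d f' d'.
Proof.
move=> [sq P]; split; first by rewrite sq.
move=> T g h e; have [u [[h1 h2] U]] := P T h g (esym e).
exists u; split => // v [v1 v2]; exact: U.
Qed.

Lemma PB (A B D C' B' : F) (i : Hom A B) (d : Hom B D) (f : Hom C' D) (d' : Hom B' C') (f' : Hom B' B) :
 confl i d -> is_pullback d f d' f' ->
 exists a : Hom A B', confl a d' /\ comp f' a = i /\ comp d' a = 0.
Proof.
move=> Eid [sq1 P1].
have [Ki Ci] := E_kc Eid.
have [B'' [d'' [f'' [[sq2 P2] [A'' [a'' Ea]]]]]] := E2op f Eid.
have [Ka _] := E_kc Ea.
have c0 : comp f (0 : Hom A C') = comp d i by rewrite comp0r (proj1 Ki).
have [a [[da fa] _]] := P1 A 0 i c0.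
have [phi [[dphi fphi] _]] := P1 B'' d'' f'' (esym sq2).
have [psi [[dpsi fpsi] _]] := P2 B' d' f' (esym sq1).
have kill : comp d (comp f'' a'') = 0.
  by rewrite assoc sq2 -assoc (proj1 Ka) comp0r.
have [u [iu _]] := (proj2 Ki) A'' (comp f'' a'') kill.
have [w [[dw fw] _]] := P2 A 0 i c0.
have [v [av _]] := (proj2 Ka) A w dw.
have uv : comp u v = idm A.
  by apply: (ker_mono Ki); rewrite assoc iu -assoc av fw comp1r.
have c1 : comp f (0 : Hom A'' C') = comp d (comp f'' a'') by rewrite comp0r kill.
have wu : comp w u = a''.
  apply: (uniq2 (P2 A'' 0 (comp f'' a'') c1)); split.
  - by rewrite assoc dw comp0l.
  - by rewrite assoc fw iu.
  - exact: (proj1 Ka).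
  - by [].
have vu : comp v u = idm A''.
  by apply: (ker_mono Ka); rewrite assoc av wu comp1r.
have isophi : is_iso phi.
  exists psi; split.
  - apply: (uniq2 (P2 B'' d'' f'' (esym sq2))); split.
    + by rewrite assoc dpsi dphi.
    + by rewrite assoc fpsi fphi.
    + by rewrite comp1r.
    + by rewrite comp1r.
  - apply: (uniq2 (P1 B' d' f' (esym sq1))); split.
    + by rewrite assoc dphi dpsi.
    + by rewrite assoc fphi fpsi.
    + by rewrite comp1r.
    + by rewrite comp1r.
exists a; split; last by [].
apply: (E_iso (a := u) (b := phi) (c := idm C') Ea).
- by exists v.
- exact: isophi.
- exact: iso_id.
- apply: (uniq2 (P1 A'' 0 (comp f'' a'') c1)); split.
  + by rewrite assoc da comp0l.
  + by rewrite assoc fa iu.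
  + by rewrite assoc dphi (proj1 Ka).
  + by rewrite assoc fphi.
- by rewrite dphi comp1l.
Qed.

End Helpers.

Lemma ext_closed (F : exact_cat) (M : subcat F) (K B I M' Z : F) (k : Hom K B) (d' : Hom B I)
  (j : Hom B Z) (q : Hom Z M') :
  confl k d' -> injective_obj I -> Ext1_zero M' K -> confl j q ->
  exists t : Hom M' Z, comp q t = idm M'.
Proof.
move=> Ekd Iinj ExtK Ejq.
have [Kk Ck] := E_kc Ekd.
have [Kj Cj] := E_kc Ejq.
have [rho rhoj] := Iinj _ _ j (ex_intro _ M' (ex_intro _ q Ejq)) d'.
have [W [c Ec]] : inflation (comp j k).
  apply: E1; [by exists I, d' | by exists M', q].
have [Kc Cc] := E_kc Ec.
have [e [ed _]] := (proj2 Ck) W (comp c j) ltac:(by rewrite -assoc (proj1 Kc)).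
have [g [gc _]] := (proj2 Cc) M' q ltac:(by rewrite assoc (proj1 Kj) comp0l).
have [r [rc _]] := (proj2 Cc) I rho ltac:(by rewrite assoc rhoj (proj1 Kk)).
have re : comp r e = idm I.
  by apply: (coker_epi Ck); rewrite -assoc ed assoc rc rhoj comp1l.
have ge : comp g e = 0.
  by apply: (coker_epi Ck); rewrite -assoc ed assoc gc (proj1 Kj) comp0l.
set h := idm W - comp e r.
have he : comp h e = 0 by rewrite /h compDl compNl comp1l -assoc re comp1r subrr.
have [sig [sigq _]] := (proj2 Cj) W (comp h c) ltac:(by rewrite -assoc -ed assoc he comp0l).
have gepi : forall (T : F) (x y : Hom M' T), comp x g = comp y g -> x = y.
  move=> T x y H; apply: (coker_epi Cj); by rewrite -gc !assoc H.
have gsig : comp g sig = idm M'.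
  apply: gepi; rewrite comp1l -assoc.
  have -> : comp sig g = h by apply: (coker_epi Cc); rewrite -assoc gc sigq.
  by rewrite /h compDr compNr comp1r assoc ge comp0l subr0.
have [Q [c' [s' [pb _]]]] := E2op sig Ec.
have [a [Ea _]] := PB Ec pb.
have [tau ctau] := ExtK _ _ _ Ea.
exists (comp s' tau).
by rewrite -gc -assoc (assoc c) (proj1 pb) -assoc ctau comp1r gsig.
Qed.

Theorem mainTheorem10 (F : exact_cat) (hinj : enough_injectives F) (M : subcat F) :
  (exists N : subcat F, complete_cotorsion_pair M N) <->
  (special_precovering M /\ closed_under_summands M).
Proof.
split.
- move=> [N [c1 [c2 [c3 c4]]]]; split.
  + move=> X; have [N1 [M1 [i [d [E [MM1 NN1]]]]]] := c3 X.
    exists N1, M1, i, d; split=> //; split=> // M' HM'.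
    exact: (proj1 (c1 N1) NN1 M' HM').
  + move=> X Y P p1 p2 e1 e2 [p1e1 _] MP; apply/(c2 X) => Y' NY' Z i d Eid.
    have Ext := proj1 (c2 P) MP Y' NY'.
    have [B' [d' [f' [pb _]]]] := E2op p1 Eid.
    have [a [Ea _]] := PB Eid pb.
    have [s' ds'] := Ext _ _ _ Ea.
    exists (comp f' (comp s' e1)).
    by rewrite assoc (proj1 pb) -assoc (assoc d') ds' comp1l p1e1.
- move=> [sp cs]; exists (fun Y => forall X, M X -> Ext1_zero X Y).
  split; [|split; [|split]].
  + by move=> Y.
  + move=> X; split; first by move=> MX Y HY; exact: HY X MX.
    move=> H; have [K [M0 [i [d [E [MM0 HK]]]]]] := sp X.
    have [s ds] := H K HK _ _ _ E.
    have [Ki Ci] := E_kc E.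
    have [r [ir _]] := (proj2 Ki) M0 (idm M0 - comp s d)
      ltac:(by rewrite compDr compNr comp1r assoc ds comp1l subrr).
    apply: (cs X K M0 d r s i) MM0; split; [exact: ds|split; [|split; [|split]]].
    * apply: (ker_mono Ki); rewrite assoc ir compDl compNl comp1l -assoc (proj1 Ki).
      by rewrite comp0r subr0 comp1r.
    * exact: (proj1 Ki).
    * apply: (ker_mono Ki); rewrite assoc ir compDl compNl comp1l -assoc ds comp1r.
      by rewrite subrr comp0r.
    * by rewrite ir addrC subrK.
  + move=> X; have [K [M0 [i [d [E [MM0 HK]]]]]] := sp X.
    by exists K, M0, i, d.
  + move=> X; have [I [iota [Iinj [C [pi Eip]]]]] := hinj X.
    have [K [M0 [ka [de [Ekd [MM0 HK]]]]]] := sp C.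
    have [B [d' [f' [pb _]]]] := E2op pi Ekd.
    have [k [Ek _]] := PB Ekd pb.
    have [x [Ex _]] := PB Eip (pb_sym pb).
    exists B, M0, x, f'; split=> //; split=> //.
    move=> M' HM' Z j q Ejq.
    exact: (ext_closed M Ek Iinj (HK M' HM') Ejq).
Qed.
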